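(* Let $\mathcal L^*$ be the optimal average cost of the original problem and $\mathcal L^*(N)$ the optimal average cost of the truncated problem with truncation level $N$. Then $\lim_{N\to\infty}\mathcal L^*(N)=\mathcal L^*$.
   Context: Fix $p,q\in(0,1)$, $\bar p=1-p$, $\bar q=1-q$. The source $\{X_t\}$ is a Markov chain on $\{0,1\}$ with $\Pr[X_{t+1}=1\mid X_t=0]=p$, $\Pr[X_{t+1}=0\mid X_t=1]=q$; channel i.i.d. Bernoulli with success probability $p_s\in(0,1]$, independent of the source, $p_f=1-p_s$. Actions $A_t\in\{0,1\}$ chosen from the history. Estimate dynamics: if $A_t=1$ and the transmission succeeds then $\hat X_{t+1}=X_{t+1}$, otherwise $\hat X_{t+1}=\hat X_t$. Original problem: age $\Delta_{t+1}=\Delta_t+1$ if $X_{t+1}\ne\hat X_{t+1}$, else $0$; state $S_t=(X_t,\hat X_t,\Delta_t)\in\mathcal S=\{(0,0,0),(1,1,0)\}\cup\{(1,0,\delta),(0,1,\delta):\delta\ge1\}$, $S_1=(0,0,0)$. Truncated problem with level $N$: age $\Delta_{t+1}=\min(\Delta_t+1,N)$ if $X_{t+1}\ne\hat X_{t+1}$, else $0$; state space $\mathcal S_N=\{(0,0,0),(1,1,0)\}\cup\{(1,0,\delta),(0,1,\delta):1\le\delta\le N\}$. In both, per-state cost $c(s)=\beta\delta$ for $s=(1,0,\delta)$, $(1-\beta)\delta$ for $s=(0,1,\delta)$, $0$ for synced states, $\beta\in[0,1]$; per-stage cost $\ell(s,a)=\mathbb E[c(S_{t+1})\mid S_t=s,A_t=a]+\lambda\mathbb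 1\{a=1\}$, $\lambda\ge0$; average cost $\limsup_{T\to\infty}\frac1T\sum_{t=1}^T\mathbb E^\pi[\ell(S_t,A_t)\mid S_1=(0,0,0)]$; optimal values are infima over all admissible policies. *)

(* Defs.v *)
From Stdlib Require Import Reals List.
From Coquelicot Require Import Coquelicot.
Open Scope R_scope.

Definition state : Type := (bool * bool * nat)%type.
Definition sx (s : state) : bool := fst (fst s).
Definition sxh (s : state) : bool := snd (fst s).
Definition sd (s : state) : nat := snd s.

Definition s1 : state := (false, false, 0%nat).

(* Pr[X_{t+1} = x' | X_t = x] *)
Definition prob_x (p q : R) (x x' : bool) : R :=
  if x then (if x' then 1 - q else q) else (if x' then p else 1 - p).

Definition prob_c (ps : R) (succ : bool) : R := if succ then ps else 1 - ps.

(* Next state given the age-update rule g (g = S for the original problem,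
   g = fun d => min (d+1) N for the truncated one), the action a, the next
   source value x' and the channel outcome succ. *)
Definition next (g : nat -> nat) (s : state) (a : bool) (x' succ : bool) : state :=
  let xh' := if andb a succ then x' else sxh s in
  let d' := if Bool.eqb x' xh' then 0%nat else g (sd s) in
  (x', xh', d').

Definition age_orig : nat -> nat := S.
Definition age_trunc (N : nat) : nat -> nat := fun d => Nat.min (S d) N.

(* Expectation over (X_{t+1}, channel outcome) given X_t = x. *)
Definition Eout (p q ps : R) (x : bool) (f : bool -> bool -> R) : R :=
  prob_x p q x true * prob_c ps true * f true true
  + prob_x p q x true * prob_c ps false * f true false
  + prob_x p q x false * prob_c ps true * f false true
  + prob_x p q x false * prob_c ps false * f false false.

Definition cost (beta : R) (s : state) : R :=
  match sx s, sxh s with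
  | true, false => beta * INR (sd s)
  | false, true => (1 - beta) * INR (sd s)
  | _, _ => 0
  end.

Definition stage (p q ps beta lam : R) (g : nat -> nat) (s : state) (a : bool) : R :=
  Eout p q ps (sx s) (fun x' c => cost beta (next g s a x' c))
  + (if a then lam else 0).

(* A (possibly randomized, history-dependent) policy: given the past
   history (list of (state, action) pairs, most recent first) and the
   current state, it returns the probability of choosing action 1. *)
Definition policy : Type := list (state * bool) -> state -> R.

Definition admissible (pi : policy) : Prop :=
  forall h s, 0 <= pi h s <= 1.

Fixpoint W (p q ps beta lam : R) (g : nat -> nat) (pi : policy)
         (h : list (state * bool)) (s : state) (k : nat) : R :=
  match k with
  | O => 0
  | S k' =>
      pi h s * (stage p q ps beta lam g s true
                + Eout p q ps (sx s)
                    (fun x' c => W p q ps beta lam g pi ((s, true) :: h)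
                                   (next g s true x' c) k'))
      + (1 - pi h s) * (stage p q ps beta lam g s false
                + Eout p q ps (sx s)
                    (fun x' c => W p q ps beta lam g pi ((s, false) :: h)
                                   (next g s false x' c) k'))
  end.

Definition avg_cost (p q ps beta lam : R) (g : nat -> nat) (pi : policy) : Rbar :=
  LimSup_seq (fun T => W p q ps beta lam g pi nil s1 T / INR T).

Definition opt_cost (p q ps beta lam : R) (g : nat -> nat) : Rbar :=
  Rbar_glb (fun J => exists pi, admissible pi /\ J = avg_cost p q ps beta lam g pi).

Definition Rbar_seq_cv (u : nat -> Rbar) (l : Rbar) : Prop :=
  match l with
  | Finite l => forall eps : R, 0 < eps ->
      exists N0, forall N, (N0 <= N)%nat ->
        exists r, u N = Finite r /\ Rabs (r - l) < eps
  | p_infty => forall M : R, exists N0, forall N, (N0 <= N)%nat -> Rbar_lt (Finite M) (u N)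
  | m_infty => forall M : R, exists N0, forall N, (N0 <= N)%nat -> Rbar_lt (u N) (Finite M)
  end.

(* Main.v *)
Require Import Defs.
From Stdlib Require Import Reals Lra Lia Psatz List.
Open Scope list_scope.
From Coquelicot Require Import Coquelicot.
Open Scope R_scope.

Section S.
Variables p q ps beta lam : R.
Hypothesis Hp : 0 <= p <= 1.
Hypothesis Hq : 0 <= q <= 1.
Hypothesis Hps : 0 <= ps <= 1.
Hypothesis Hb : 0 <= beta <= 1.
Hypothesis Hl : 0 <= lam.

Lemma Eout_le x f g : (forall a b, f a b <= g a b) ->
  Eout p q ps x f <= Eout p q ps x g.
Proof.
  intros H. unfold Eout, prob_x, prob_c.
  assert (0 <= 1 - p) by lra. assert (0 <= 1 - q) by lra. assert (0 <= 1 - ps) by lra.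
  destruct x;
  repeat apply Rplus_le_compat; apply Rmult_le_compat_l; try apply H;
  apply Rmult_le_pos; lra.
Qed.

Lemma Eout_lin x u f g :
  Eout p q ps x (fun a b => u * f a b + g a b) = u * Eout p q ps x f + Eout p q ps x g.
Proof. unfold Eout; ring. Qed.

Lemma Eout_plus x f g :
  Eout p q ps x (fun a b => f a b + g a b) = Eout p q ps x f + Eout p q ps x g.
Proof. unfold Eout; ring. Qed.

End S.

Definition tau (N : nat) (s : state) : state := (fst s, Nat.min (snd s) N).

Lemma next_tau N s a x c :
  next (age_trunc N) (tau N s) a x c = tau N (next age_orig s a x c).
Proof.
  destruct s as [[x0 xh] d]. unfold next, tau, age_trunc, age_orig, sd, sxh; cbn [fst snd].
  destruct a, c, x, xh; cbn [andb Bool.eqb fst snd]; f_equal; lia.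
Qed.

Lemma cost_tau beta N u : 0 <= beta <= 1 -> cost beta (tau N u) <= cost beta u.
Proof.
  intros Hb. destruct u as [[x xh] d]. unfold cost, tau, sx, sxh, sd; simpl.
  assert (INR (Nat.min d N) <= INR d) by (apply le_INR; lia).
  destruct x, xh; try lra; apply Rmult_le_compat_l; lra.
Qed.

Fixpoint age_rec (h : list (state * bool)) (s : state) : nat :=
  if Bool.eqb (sx s) (sxh s) then 0%nat else
  match h with nil => sd s | (s0, _) :: h' => S (age_rec h' s0) end.

Definition srec (h : list (state * bool)) (s : state) : state :=
  ((sx s, sxh s), age_rec h s).

Fixpoint hrec (h : list (state * bool)) : list (state * bool) :=
  match h with nil => nil | (s0, a) :: h' => (srec h' s0, a) :: hrec h' end.

Definition polA (pi : policy) : policy := fun h s => pi (hrec h) (srec h s).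

Lemma srec_next N h s' a x c :
  srec h (tau N s') = s' ->
  srec ((tau N s', a) :: h) (next (age_trunc N) (tau N s') a x c) = next age_orig s' a x c.
Proof.
  destruct s' as [[x0 xh] d]. unfold srec at 1. intros H. injection H as H.
  unfold srec, next, tau, age_trunc, age_orig, sd, sx, sxh in *; cbn [fst snd] in *.
  destruct a, c, x, xh; cbn [andb Bool.eqb fst snd age_rec]; try reflexivity;
  cbn [fst snd sx sxh Bool.eqb]; rewrite H; reflexivity.
Qed.

Lemma mix_le (a A0 A1 B0 B1 : R) : 0 <= a <= 1 -> A1 <= B1 -> A0 <= B0 ->
  a * A1 + (1 - a) * A0 <= a * B1 + (1 - a) * B0.
Proof. intros. nra. Qed.

Section A.
Variables p q ps beta lam : R.
Hypothesis Hp : 0 <= p <= 1.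
Hypothesis Hq : 0 <= q <= 1.
Hypothesis Hps : 0 <= ps <= 1.
Hypothesis Hb : 0 <= beta <= 1.
Hypothesis Hl : 0 <= lam.
Variable N : nat.
Variable pi : policy.
Hypothesis Hpi : admissible pi.

Lemma stage_tau s a :
  stage p q ps beta lam (age_trunc N) (tau N s) a <= stage p q ps beta lam age_orig s a.
Proof.
  unfold stage. apply Rplus_le_compat_r. apply Eout_le; auto.
  intros x c. rewrite next_tau. apply cost_tau; auto.
Qed.

Lemma WA k : forall h s h' s', hrec h = h' -> srec h s = s' -> s = tau N s' ->
  W p q ps beta lam (age_trunc N) (polA pi) h s k <= W p q ps beta lam age_orig pi h' s' k.
Proof.
  induction k as [|k IH]; intros h s h' s' E1 E2 E3; simpl; [lra|].
  assert (Hpa : polA pi h s = pi h' s') by (unfold polA; rewrite E1, E2; reflexivity).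
  rewrite Hpa. subst s. apply mix_le; [apply Hpi| |];
  (apply Rplus_le_compat; [apply stage_tau|]);
  apply Eout_le; auto; intros x c; apply IH.
  all: first [ (simpl; rewrite E2, E1; reflexivity) | (apply srec_next; auto) | apply next_tau].
Qed.
End A.

Definition phi (k : R) (M d : nat) : R := k * INR (d - M).

Lemma core (e k r : R) (M N : nat) :
  0 < e -> 0 < r -> 0 <= k -> k * r = 1 - r -> (M <= N)%nat -> (1 <= M)%nat ->
  k <= e * (INR M + 1) -> k + (1 - r) * INR M <= (1 - r) * INR N ->
  forall d rho, 0 <= rho <= 1 - r ->
  rho * (INR (S d) + phi k M (S d) - (1 + e) * INR (Nat.min (S d) N)) <= phi k M d.
Proof.
  intros He Hr Hk Hkr HMN HM1 HkM HN d rho Hrho. unfold phi.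
  rewrite S_INR.
  destruct (Compare_dec.le_lt_dec (S d) M) as [H1|H1].
  - replace (S d - M)%nat with 0%nat by lia. replace (d - M)%nat with 0%nat by lia.
    replace (Nat.min (S d) N) with (S d) by lia. rewrite S_INR. change (INR 0) with 0.
    assert (0 <= INR d) by apply pos_INR.
    assert (0 <= rho * (e * (INR d + 1))) by (apply Rmult_le_pos; nra). nra.
  - rewrite (minus_INR (S d) M) by lia. rewrite (minus_INR d M) by lia. rewrite S_INR.
    assert (HdM : INR M <= INR d) by (apply le_INR; lia).
    assert (B : forall B, (1 - r) * B <= k * (INR d - INR M) -> rho * B <= k * (INR d - INR M)).
    { intros B HB. destruct (Rle_dec 0 B). nra. nra. }
    apply B.
    destruct (Compare_dec.le_lt_dec (S d) N) as [H2|H2].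
    + replace (Nat.min (S d) N) with (S d) by lia. rewrite S_INR.
      assert (0 <= r * k * (INR d - INR M)) by (apply Rmult_le_pos; nra).
      assert ((1 - r) * k <= (1 - r) * (e * (INR d + 1))).
      { apply Rmult_le_compat_l. nra. nra. }
      nra.
    + replace (Nat.min (S d) N) with N by lia.
      assert (HdN : INR N <= INR d) by (apply le_INR; lia).
      assert (Hid : (1 - r) * (1 + k) = k) by lra.
      assert (E1 : (1 - r) * (INR d + 1) + (1 - r) * k * (INR d + 1) = k * (INR d + 1))
        by (transitivity ((1-r)*(1+k)*(INR d+1)); [ring | rewrite Hid; ring]).
      assert (E2 : (1 - r) * k * INR M = k * INR M - (1 - r) * INR M)
        by (transitivity (k*INR M - (k*r)*INR M); [ring | rewrite Hkr; ring]).
      assert (0 <= 1 - r) by nra.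
      assert (0 <= (1 - r) * e * INR N).
      { apply Rmult_le_pos; [nra|]. apply pos_INR. }
      nra.
Qed.

Section B.
Variables p q ps beta lam : R.
Hypothesis Hp : 0 <= p <= 1.
Hypothesis Hq : 0 <= q <= 1.
Hypothesis Hps : 0 <= ps <= 1.
Hypothesis Hb : 0 <= beta <= 1.
Hypothesis Hl : 0 <= lam.
Variables (e k r : R) (M N : nat).
Hypothesis He : 0 < e.
Hypothesis Hr : 0 < r.
Hypothesis Hk : 0 <= k.
Hypothesis Hkr : k * r = 1 - r.
Hypothesis HMN : (M <= N)%nat.
Hypothesis HM1 : (1 <= M)%nat.
Hypothesis HkM : k <= e * (INR M + 1).
Hypothesis HN : k + (1 - r) * INR M <= (1 - r) * INR N.
Hypothesis Hrp : r <= p.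
Hypothesis Hrq : r <= q.

Definition Phi (s : state) : R :=
  match sx s, sxh s with
  | true, false => beta * phi k M (sd s)
  | false, true => (1 - beta) * phi k M (sd s)
  | _, _ => 0
  end.

Lemma phi_nonneg d : 0 <= phi k M d.
Proof. unfold phi. apply Rmult_le_pos; [lra | apply pos_INR]. Qed.

Lemma Phi_nonneg s : 0 <= Phi s.
Proof.
  destruct s as [[x xh] d]; unfold Phi, sx, sxh, sd; simpl.
  pose proof (phi_nonneg d). destruct x, xh; try lra; apply Rmult_le_pos; lra.
Qed.

Let core' := core e k r M N He Hr Hk Hkr HMN HM1 HkM HN.

Lemma phi1 : phi k M 1 = 0.
Proof. unfold phi. replace (1 - M)%nat with 0%nat by lia. simpl; ring. Qed.

Ltac uns rho w :=
  match goal with d : nat |- _ =>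
  let H := fresh in assert (H := core' d rho ltac:(split; nra));
  let H2 := fresh in assert (H2 : 0 <= w) by lra;
  let H3 := fresh in pose proof (Rmult_le_compat_l w _ _ H2 H) as H3; lra end.

Ltac syn rho w :=
  match goal with H : Nat.min 1 N = 1%nat |- _ => rewrite H end; match goal with H : phi k M 1 = 0 |- _ => rewrite H end;
  change (INR 1) with 1;
  let H := fresh in assert (H : 0 <= rho * w * e) by (apply Rmult_le_pos; [apply Rmult_le_pos|]; nra);
  lra.

Lemma key s a : (sx s = sxh s -> sd s = 0%nat) ->
  Eout p q ps (sx s) (fun x c => cost beta (next age_orig s a x c) + Phi (next age_orig s a x c))
  <= Phi s + (1 + e) * Eout p q ps (sx s) (fun x c => cost beta (tau N (next age_orig s a x c))).
Proof.
  destruct s as [[x0 xh] d]. intros Hwf.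
  assert (HmN : Nat.min 1 N = 1%nat) by lia.
  pose proof phi1.
  destruct x0, xh, a; unfold Eout, prob_x, prob_c, next, cost, Phi, tau, sx, sxh, sd, age_orig in *;
    cbn [fst snd andb Bool.eqb] in *.
  - rewrite (Hwf eq_refl) in *. syn (q * (1 - ps)) (1 - beta).
  - rewrite (Hwf eq_refl) in *. syn q (1 - beta).
  - uns ((1 - q) * (1 - ps)) beta.
  - uns (1 - q) beta.
  - uns ((1 - p) * (1 - ps)) (1 - beta).
  - uns (1 - p) (1 - beta).
  - rewrite (Hwf eq_refl) in *. syn (p * (1 - ps)) beta.
  - rewrite (Hwf eq_refl) in *. syn p beta.
Qed.

Definition tauh (u : state * bool) : state * bool := (tau N (fst u), snd u).
Definition polB (sigma : policy) : policy := fun h s => sigma (map tauh h) (tau N s).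

Lemma wf_next g s a x c :
  sx (next g s a x c) = sxh (next g s a x c) -> sd (next g s a x c) = 0%nat.
Proof.
  unfold next, sx, sxh, sd; cbn [fst snd]. intros H. match goal with |- (if ?b then _ else _) = _ => destruct b eqn:E end; auto.
  apply Bool.eqb_false_iff in E. contradiction.
Qed.

Variable sigma : policy.
Hypothesis Hsig : admissible sigma.

Lemma step_a T h s a
  (IH : forall h s, (sx s = sxh s -> sd s = 0%nat) ->
     W p q ps beta lam age_orig (polB sigma) h s T <=
     (1 + e) * W p q ps beta lam (age_trunc N) sigma (map tauh h) (tau N s) T + Phi s) :
  (sx s = sxh s -> sd s = 0%nat) ->
  stage p q ps beta lam age_orig s a +
  Eout p q ps (sx s) (fun x c => W p q ps beta lam age_orig (polB sigma) ((s, a) :: h)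
                                    (next age_orig s a x c) T)
  <= (1 + e) * (stage p q ps beta lam (age_trunc N) (tau N s) a +
  Eout p q ps (sx s) (fun x c => W p q ps beta lam (age_trunc N) sigma ((tau N s, a) :: map tauh h)
                                    (next (age_trunc N) (tau N s) a x c) T)) + Phi s.
Proof.
  intros Hwf.
  assert (H1 : Eout p q ps (sx s) (fun x c => W p q ps beta lam age_orig (polB sigma) ((s, a) :: h)
                                    (next age_orig s a x c) T) <=
    Eout p q ps (sx s) (fun x c => (1 + e) * W p q ps beta lam (age_trunc N) sigma ((tau N s, a) :: map tauh h)
                                    (next (age_trunc N) (tau N s) a x c) T + Phi (next age_orig s a x c))).
  { apply Eout_le; auto. intros x c. rewrite next_tau. apply (IH ((s, a) :: h)). apply wf_next. }
  rewrite Eout_lin in H1.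
  pose proof (key s a Hwf) as H2. rewrite Eout_plus in H2.
  unfold stage.
  assert (H3 : Eout p q ps (sx (tau N s)) (fun x c => cost beta (next (age_trunc N) (tau N s) a x c))
     = Eout p q ps (sx s) (fun x c => cost beta (tau N (next age_orig s a x c)))).
  { unfold Eout. rewrite !next_tau. reflexivity. }
  rewrite H3.
  assert (H4 : (if a then lam else 0) <= (1 + e) * (if a then lam else 0)) by (destruct a; nra).
  lra.
Qed.

Lemma WB T : forall h s, (sx s = sxh s -> sd s = 0%nat) ->
  W p q ps beta lam age_orig (polB sigma) h s T <=
  (1 + e) * W p q ps beta lam (age_trunc N) sigma (map tauh h) (tau N s) T + Phi s.
Proof.
  induction T as [|T IH]; intros h s Hwf; simpl.
  - pose proof (Phi_nonneg s). lra.
  - change (polB sigma h s) with (sigma (map tauh h) (tau N s)).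
    pose proof (step_a T h s true IH Hwf) as A1.
    pose proof (step_a T h s false IH Hwf) as A0.
    pose proof (Hsig (map tauh h) (tau N s)) as Hs.
    eapply Rle_trans; [apply mix_le; [exact Hs | exact A1 | exact A0] | change (sx (tau N s)) with (sx s); right; ring].
Qed.
End B.

Lemma mult_pinf a : 0 < a -> Rbar_mult (Finite a) p_infty = p_infty.
Proof.
  intros Ha. unfold Rbar_mult, Rbar_mult'.
  repeat match goal with |- context [Rle_dec ?x ?y] => destruct (Rle_dec x y) end; try lra;
  repeat match goal with |- context [Rle_lt_or_eq_dec ?x ?y ?z] => destruct (Rle_lt_or_eq_dec x y z) end;
  try reflexivity; lra.
Qed.

Lemma mult_minf a : 0 < a -> Rbar_mult (Finite a) m_infty = m_infty.
Proof.
  intros Ha. unfold Rbar_mult, Rbar_mult'.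
  repeat match goal with |- context [Rle_dec ?x ?y] => destruct (Rle_dec x y) end; try lra;
  repeat match goal with |- context [Rle_lt_or_eq_dec ?x ?y ?z] => destruct (Rle_lt_or_eq_dec x y z) end;
  try reflexivity; lra.
Qed.

Lemma LimSup_scal a u : 0 < a ->
  LimSup_seq (fun n => a * u n) = Rbar_mult a (LimSup_seq u).
Proof.
  intros Ha. apply is_LimSup_seq_unique, is_LimSup_seq_scal_pos; auto.
  unfold LimSup_seq. destruct (ex_LimSup_seq u); auto.
Qed.

Lemma glb_ok E : Rbar_is_glb E (Rbar_glb E).
Proof. unfold Rbar_glb. destruct (Rbar_ex_glb E); auto. Qed.

Lemma inv_INR_nonneg T : 0 <= / INR T.
Proof.
  destruct T. simpl. rewrite Rinv_0. lra.
  apply Rlt_le, Rinv_0_lt_compat, lt_0_INR; lia.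
Qed.

Lemma F1 p q ps beta lam N :
  0 <= p <= 1 -> 0 <= q <= 1 -> 0 <= ps <= 1 -> 0 <= beta <= 1 -> 0 <= lam ->
  Rbar_le (opt_cost p q ps beta lam (age_trunc N)) (opt_cost p q ps beta lam age_orig).
Proof.
  intros Hp Hq Hps Hb Hl. unfold opt_cost.
  destruct (glb_ok (fun J => exists pi, admissible pi /\ J = avg_cost p q ps beta lam age_orig pi)) as [_ Hg].
  apply Hg. intros J [pi [Hpi ->]].
  destruct (glb_ok (fun J => exists pi, admissible pi /\ J = avg_cost p q ps beta lam (age_trunc N) pi)) as [Hlb _].
  eapply Rbar_le_trans. apply Hlb. exists (polA pi). split.
  { intros h s. unfold polA. apply Hpi. } reflexivity.
  unfold avg_cost. apply LimSup_le. exists 0%nat. intros T _.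
  unfold Rdiv. apply Rmult_le_compat_r. apply inv_INR_nonneg.
  apply WA; auto.
Qed.

Lemma F2 p q ps beta lam e :
  0 < p < 1 -> 0 < q < 1 -> 0 < ps <= 1 -> 0 <= beta <= 1 -> 0 <= lam -> 0 < e ->
  exists N0, forall N, (N0 <= N)%nat -> forall sigma, admissible sigma ->
  Rbar_le (opt_cost p q ps beta lam age_orig)
          (Rbar_mult (1 + e) (avg_cost p q ps beta lam (age_trunc N) sigma)).
Proof.
  intros Hp Hq Hps Hb Hl He.
  set (r := Rmin p q).
  assert (Hr : 0 < r) by (unfold r; apply Rmin_glb_lt; lra).
  assert (Hr1 : r < 1) by (unfold r; apply Rle_lt_trans with p; [apply Rmin_l | lra]).
  assert (Hrp : r <= p) by apply Rmin_l.
  assert (Hrq : r <= q) by apply Rmin_r.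
  set (k := (1 - r) / r).
  assert (Hkr : k * r = 1 - r) by (unfold k; field; lra).
  assert (Hk : 0 <= k) by (unfold k; apply Rmult_le_pos; [lra | apply Rlt_le, Rinv_0_lt_compat; lra]).
  destruct (INR_unbounded (k / e)) as [M0 HM0].
  set (M := S M0).
  assert (HkM : k <= e * (INR M + 1)).
  { unfold M. rewrite S_INR. assert (k <= e * INR M0).
    { apply Rmult_gt_compat_l with (r := e) in HM0; [|lra].
      replace (e * (k / e)) with k in HM0 by (field; lra). lra. }
    nra. }
  destruct (INR_unbounded ((k + (1 - r) * INR M) / (1 - r))) as [N1 HN1].
  exists (Nat.max N1 M). intros N HN sigma Hsig.
  assert (HMN : (M <= N)%nat) by lia.
  assert (HM1 : (1 <= M)%nat) by (unfold M; lia).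
  assert (HNr : k + (1 - r) * INR M <= (1 - r) * INR N).
  { assert (INR N1 <= INR N) by (apply le_INR; lia).
    apply Rmult_gt_compat_l with (r := 1 - r) in HN1; [|lra].
    replace ((1 - r) * ((k + (1 - r) * INR M) / (1 - r))) with (k + (1 - r) * INR M) in HN1
      by (field; lra).
    nra. }
  unfold opt_cost.
  destruct (glb_ok (fun J => exists pi, admissible pi /\ J = avg_cost p q ps beta lam age_orig pi)) as [Hlb _].
  eapply Rbar_le_trans. apply Hlb. exists (polB N sigma). split.
  { intros h s. unfold polB. apply Hsig. } reflexivity.
  unfold avg_cost. rewrite <- LimSup_scal by lra.
  apply LimSup_le. exists 0%nat. intros T _.
  assert (HW := WB p q ps beta lam ltac:(lra) ltac:(lra) ltac:(lra) Hb Hl e k r M N He Hr Hk Hkr HMN HM1 HkM HNr Hrp Hrq sigma Hsig T nil s1 ltac:(intros; reflexivity)).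
  change (Phi beta k M s1) with 0 in HW.
  change (map (tauh N) nil) with (@nil (state * bool)) in HW.
  change (tau N s1) with s1 in HW.
  pose proof (inv_INR_nonneg T).
  unfold Rdiv. rewrite <- Rmult_assoc. apply Rmult_le_compat_r; lra.
Qed.

Theorem theorem4 (p q ps beta lam : R) :
  0 < p < 1 -> 0 < q < 1 -> 0 < ps <= 1 -> 0 <= beta <= 1 -> 0 <= lam ->
  Rbar_seq_cv (fun N => opt_cost p q ps beta lam (age_trunc N))
              (opt_cost p q ps beta lam age_orig).
Proof.
  intros Hp Hq Hps Hb Hl.
  assert (HF1 := fun N => F1 p q ps beta lam N ltac:(lra) ltac:(lra) ltac:(lra) Hb Hl).
  assert (HF2 := fun e He => F2 p q ps beta lam e Hp Hq Hps Hb Hl He).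
  destruct (opt_cost p q ps beta lam age_orig) as [l | |] eqn:EL; simpl.
  - intros eps Heps.
    set (e := eps / (Rabs l + 1)).
    assert (He : 0 < e) by (unfold e; apply Rdiv_lt_0_compat; [lra | pose proof (Rabs_pos l); lra]).
    destruct (HF2 e He) as [N0 HN0]. exists N0. intros N HN.
    assert (Hlow : Rbar_le (Finite (l / (1 + e))) (opt_cost p q ps beta lam (age_trunc N))).
    { unfold opt_cost at 1.
      destruct (glb_ok (fun J => exists pi, admissible pi /\ J = avg_cost p q ps beta lam (age_trunc N) pi)) as [_ Hg].
      apply Hg. intros J [sigma [Hs ->]].
      specialize (HN0 N HN sigma Hs). try rewrite EL in HN0.
      destruct (avg_cost p q ps beta lam (age_trunc N) sigma) as [j | |].
      - simpl in HN0 |- *. apply Rle_div_l; lra.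
      - simpl; auto.
      - rewrite mult_minf in HN0 by lra. simpl in HN0. contradiction. }
    specialize (HF1 N). try rewrite EL in HF1.
    destruct (opt_cost p q ps beta lam (age_trunc N)) as [y | |]; simpl in Hlow, HF1; try contradiction.
    exists y. split; auto.
    assert (Hd : l - l / (1 + e) = l * e / (1 + e)) by (field; lra).
    assert (Habs : Rabs (l * e / (1 + e)) < eps).
    { rewrite Rabs_div by lra. rewrite Rabs_mult. rewrite (Rabs_right e) by lra.
      rewrite (Rabs_right (1 + e)) by lra.
      apply Rle_lt_trans with (Rabs l * e).
      - apply Rmult_le_reg_r with (1 + e); [lra|]. unfold Rdiv. rewrite Rmult_assoc, Rinv_l by lra.
        pose proof (Rabs_pos l). nra.
      - unfold e. apply Rlt_le_trans with ((Rabs l + 1) * (eps / (Rabs l + 1))).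
        + apply Rmult_lt_compat_r; [apply Rdiv_lt_0_compat; pose proof (Rabs_pos l); lra | lra].
        + right. field. pose proof (Rabs_pos l); lra. }
    rewrite <- Hd in Habs.
    rewrite Rabs_left1 by lra. rewrite Rabs_pos_eq in Habs by lra. lra.
  - intros Mb. destruct (HF2 1 ltac:(lra)) as [N0 HN0]. exists N0. intros N HN.
    assert (Hlow : Rbar_le (Finite (Mb + 1)) (opt_cost p q ps beta lam (age_trunc N))).
    { unfold opt_cost at 1.
      destruct (glb_ok (fun J => exists pi, admissible pi /\ J = avg_cost p q ps beta lam (age_trunc N) pi)) as [_ Hg].
      apply Hg. intros J [sigma [Hs ->]].
      specialize (HN0 N HN sigma Hs). try rewrite EL in HN0.
      destruct (avg_cost p q ps beta lam (age_trunc N) sigma) as [j | |].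
      - simpl in HN0. contradiction.
      - simpl; auto.
      - rewrite mult_minf in HN0 by lra. simpl in HN0. contradiction. }
    destruct (opt_cost p q ps beta lam (age_trunc N)) as [y | |]; simpl in Hlow |- *; auto; lra.
  - intros Mb. exists 0%nat. intros N _. specialize (HF1 N). try rewrite EL in HF1.
    destruct (opt_cost p q ps beta lam (age_trunc N)); simpl in HF1 |- *; auto; contradiction.
Qed.
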